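(* Let $\mathcal{U}$ be a universe of $n$ element types with frequencies $f:\mathcal{U}\to\{1,2,\dots\}$ and total $N=\sum_{e}f(e)$, partitioned into groups $\mathbf{g}_1,\dots,\mathbf{g}_\ell$ with $n_j=|\mathbf{g}_j|$. Let $w$ be a positive integer dividing $n$, and let $w_j=\frac{n_j}{n}w$ be positive integers. Consider (i) a one-row Count-Min sketch (CM) with a uniform hash scheme, i.e. a hash $\mathsf{h}:\mathcal{U}\to[w]$ under which every bin receives exactly $n/w$ element types, and (ii) a one-row Fair-Count-Min sketch (FCM) whose $w$ bins are split into disjoint blocks of sizes $w_1,\dots,w_\ell$, with a hash mapping each group $\mathbf{g}_j$ into block $j$ so that every bin of block $j$ receives exactly $n_j/w_j$ element types of $\mathbf{g}_j$. Then $\mathcal{L}_{FCM}=\mathcal{L}_{CM}=N\left(\frac{n}{w}-1\right)$; in particular the price of fairness $\mathcal{L}_{FCM}-\mathcal{L}_{CM}$ equals $0$.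
   Context: In a one-row sketch with hash $\mathsf{h}$, the additive error of $e$ is $\varepsilon_A(e)=\sum_{e'\neq e:\mathsf{h}(e')=\mathsf{h}(e)}f(e')$, and the total additive error is $\mathcal{L}=\sum_{e\in\mathcal{U}}\varepsilon_A(e)$. The price of fairness is $\mathcal{L}_{FCM}-\mathcal{L}_{CM}$. *)

(* Defs.v *)
From mathcomp Require Import all_boot all_algebra.
Set Implicit Arguments. Unset Strict Implicit. Unset Printing Implicit Defensive.

Definition add_err (U : finType) (w : nat) (h : U -> 'I_w) (f : U -> nat) (e : U) : nat :=
  \sum_(e' : U | (e' != e) && (h e' == h e)) f e'.

Definition total_err (U : finType) (w : nat) (h : U -> 'I_w) (f : U -> nat) : nat :=
  \sum_(e : U) add_err h f e.

Definition bin_load (U : finType) (w : nat) (h : U -> 'I_w) (b : 'I_w) : nat :=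
  #|[set e : U | h e == b]|.

Definition group_size (U : finType) (l : nat) (g : U -> 'I_l) (j : 'I_l) : nat :=
  #|[set e : U | g e == j]|.

Definition price_of_fairness (U : finType) (w : nat) (hFCM hCM : U -> 'I_w) (f : U -> nat) : int :=
  (GRing.add (Posz (total_err hFCM f)) (GRing.opp (Posz (total_err hCM f)))).

(* Main.v *)
Require Import Defs.
From mathcomp Require Import all_boot all_algebra.

Lemma total_err_uniform (U : finType) (w : nat) (h : U -> 'I_w) (f : U -> nat) c :
  (forall b, bin_load h b = c) ->
  total_err h f = (\sum_(e : U) f e) * (c - 1).
Proof.
move=> Hl; rewrite /total_err /add_err.
have -> : \sum_(e : U) \sum_(e' : U | (e' != e) && (h e' == h e)) f e' =
          \sum_(e : U) \sum_(e' : U) f e' * ((e' != e) && (h e' == h e)).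
  apply: eq_bigr => e _; rewrite big_mkcond; apply: eq_bigr => e' _.
  by case: ifP => _; rewrite ?muln1 ?muln0.
rewrite exchange_big big_distrl /=; apply: eq_bigr => e' _.
rewrite -big_distrr /=; congr (_ * _).
have -> : \sum_(e : U) ((e' != e) && (h e' == h e) : nat) =
          \sum_(e : U | (e' != e) && (h e' == h e)) 1.
  by rewrite [RHS]big_mkcond; apply: eq_bigr => e _; case: ifP.
rewrite sum1_card -(Hl (h e')) /bin_load (cardsD1 e') inE eqxx /= add1n subn1 /=.
apply: eq_card => e; rewrite !inE eq_sym; congr (_ && _); exact: eq_sym.
Qed.

Theorem mainTheorem3
  (U : finType) (f : U -> nat) (l : nat) (g : U -> 'I_l)
  (w : nat) (wj : 'I_l -> nat)
  (hCM : U -> 'I_w) (hFCM : U -> 'I_w) (blk : 'I_w -> 'I_l) :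
  (forall e, 0 < f e) ->
  0 < w -> w %| #|U| ->
  (* w_j = (n_j / n) w, a positive integer *)
  (forall j, group_size g j * w = wj j * #|U|) ->
  (forall j, 0 < wj j) ->
  (* CM: uniform hash, every bin gets exactly n/w element types *)
  (forall b, bin_load hCM b = #|U| %/ w) ->
  (* FCM: bins partitioned into blocks (blk b = block of bin b) of sizes w_j *)
  (forall j, #|[set b : 'I_w | blk b == j]| = wj j) ->
  (* group g_j hashed into block j *)
  (forall e, blk (hFCM e) = g e) ->
  (* every bin of block j receives exactly n_j / w_j element types of g_j *)
  (forall b, #|[set e : U | (hFCM e == b) && (g e == blk b)]|
             = group_size g (blk b) %/ wj (blk b)) ->
  total_err hFCM f = total_err hCM f /\
  total_err hCM f = (\sum_(e : U) f e) * (#|U| %/ w - 1) /\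
  price_of_fairness hFCM hCM f = Posz 0.
Proof.
move=> _ w0 dw Hg Hwj HCM _ Hblk HF.
have HF' : forall b, bin_load hFCM b = #|U| %/ w.
  move=> b; rewrite /bin_load.
  have -> : [set e | hFCM e == b] = [set e | (hFCM e == b) && (g e == blk b)].
    apply/setP => e; rewrite !inE; case: eqP => //= <-; by rewrite Hblk eqxx.
  rewrite HF; set j := blk b.
  move: dw => /dvdnP [k Hk].
  have := Hg j; rewrite Hk mulnA => /eqP; rewrite eqn_pmul2r // => /eqP ->.
  by rewrite mulKn ?Hwj // mulnK.
have E1 := @total_err_uniform _ _ _ f _ HCM.
have E2 := @total_err_uniform _ _ _ f _ HF'.
split; first by rewrite E1 E2.
split => //.
by rewrite /price_of_fairness E1 E2 GRing.subrr.
Qed.
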